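(* Consider an extended Runge--Kutta method with parameters $a_{ij}$ ($1\le i\le s$, $1\le j\le m$), $b_i$ ($1\le i\le m$), and full-rank $(m-s)\times m$ matrix $d=(d_{ij})$. Set $a_{ij}=0$ for $i>s$, and let $M$ be the $m\times m$ matrix $M_{ij}=b_ib_j-b_ia_{ij}-b_ja_{ji}$ ($i,j=1,\dots,m$). Let $V$ be an $m\times s$ matrix whose columns form a basis of the nullspace of $d$. If $b_i=0$ for $i=s+1,\dots,m$ and $V^\top MV=0$, then the extended Runge--Kutta method is quadratic-preserving and symplectic.
   Context: For an ODE $\dot z=f(z)$ on $\mathbb{R}^n$, the extended Runge--Kutta method maps $z_0$ to $z_1$ defined by the equations, with unknowns $k_1,\dots,k_m\in\mathbb{R}^n$: $Z_i=z_0+h\sum_{j=1}^m a_{ij}k_j$ ($i=1,\dots,s$), $k_i=f(Z_i)$ ($i=1,\dots,s$), $0=\sum_{j=1}^m d_{ij}k_j$ ($i=1,\dots,m-s$), $z_1=z_0+h\sum_{i=1}^m b_ik_i$. Quadratic-preserving means: whenever $Q(z)=z^\top Cz$ ($C$ symmetric) is a first integral of $f$, every step satisfies $z_1^\top Cz_1=z_0^\top Cz_0$. Symplectic means: applied to any Hamiltonian vector field on $\mathbb{R}^{2n}$ with the canonical symplectic form, the step map $z_0\mapsto z_1$ is symplectic. *)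

(* Defs.v *)
From HB Require Import structures.
From mathcomp Require Import all_boot all_order all_algebra.
From mathcomp Require Import all_classical all_reals all_analysis.
Set Implicit Arguments. Unset Strict Implicit. Unset Printing Implicit Defensive.
Import Order.TTheory GRing.Theory Num.Theory.
Import numFieldNormedType.Exports.
Local Open Scope ring_scope.
Local Open Scope classical_set_scope.

Section ERK.
Variable R : realType.

(* The coefficient matrix a (s x m) extended by zero rows: a_ij = 0 for i >= s
   (0-based indices). *)
Definition ext_a (s m : nat) (a : 'M[R]_(s, m)) : 'M[R]_m :=
  \matrix_(i < m, j < m)
    oapp (fun i' : 'I_s => a i' j) 0 (insub (val i) : option 'I_s).

Definition Mmat (s m : nat) (a : 'M[R]_(s, m)) (b : 'I_m -> R) : 'M[R]_m :=
  \matrix_(i, j) (b i * b j - b i * ext_a a i j - b j * ext_a a j i).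

Definition erk_step (N s m : nat) (a : 'M[R]_(s, m)) (b : 'I_m -> R)
  (d : 'M[R]_(m - s, m)) (h : R) (f : 'cV[R]_N -> 'cV[R]_N)
  (z0 : 'cV[R]_N) (k : 'I_m -> 'cV[R]_N) (z1 : 'cV[R]_N) : Prop :=
  [/\ (forall i : 'I_m, (i < s)%N ->
          k i = f (z0 + h *: \sum_(j < m) ext_a a i j *: k j)),
      (forall i : 'I_(m - s), \sum_(j < m) d i j *: k j = 0) &
      z1 = z0 + h *: \sum_(i < m) b i *: k i].

Definition first_integral (N : nat) (f : 'cV[R]_N -> 'cV[R]_N)
  (I : 'cV[R]_N -> R) : Prop :=
  forall z, differentiable I z /\ 'd I z (f z) = 0.

Definition quadform (N : nat) (C : 'M[R]_N) (z : 'cV[R]_N) : R :=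
  (z^T *m C *m z) 0 0.

Definition quadratic_preserving (s m : nat) (a : 'M[R]_(s, m))
  (b : 'I_m -> R) (d : 'M[R]_(m - s, m)) : Prop :=
  forall (N : nat) (f : 'cV[R]_N -> 'cV[R]_N) (C : 'M[R]_N),
    C^T = C -> first_integral f (quadform C) ->
    forall h z0 k z1, erk_step a b d h f z0 k z1 ->
      quadform C z1 = quadform C z0.

Definition Jcan (n : nat) : 'M[R]_(n + n) :=
  block_mx 0 1%:M (- 1%:M) 0.

Definition omega (n : nat) (u v : 'cV[R]_(n + n)) : R :=
  (u^T *m Jcan n *m v) 0 0.

(* f is the Hamiltonian vector field of some differentiable H:
   dH(z) u = omega(f z, u), i.e. dq/dt = dH/dp, dp/dt = - dH/dq. *)
Definition hamiltonian_vf (n : nat) (f : 'cV[R]_(n + n) -> 'cV[R]_(n + n))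
  : Prop :=
  exists H : 'cV[R]_(n + n) -> R,
    forall z, differentiable H z /\ forall u, 'd H z u = omega (f z) u.

Definition symplectic_on (n : nat) (U : set 'cV[R]_(n + n))
  (Phi : 'cV[R]_(n + n) -> 'cV[R]_(n + n)) : Prop :=
  forall z, U z -> differentiable Phi z /\
    forall u v, omega ('d Phi z u) ('d Phi z v) = omega u v.

(* The method is symplectic: for every (smooth) Hamiltonian vector field and
   every step size, any differentiable branch z0 |-> k(z0) of solutions of the
   step equations on an open set U yields a step map that is symplectic on U. *)
Definition erk_symplectic (s m : nat) (a : 'M[R]_(s, m))
  (b : 'I_m -> R) (d : 'M[R]_(m - s, m)) : Prop :=
  forall (n : nat) (f : 'cV[R]_(n + n) -> 'cV[R]_(n + n)),
    hamiltonian_vf f -> (forall z, differentiable f z) ->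
    forall (h : R) (U : set 'cV[R]_(n + n))
      (k : 'I_m -> 'cV[R]_(n + n) -> 'cV[R]_(n + n)),
      open U ->
      (forall i z, U z -> differentiable (k i) z) ->
      (forall z, U z ->
         erk_step a b d h f z (fun i => k i z)
                  (z + h *: \sum_(i < m) b i *: k i z)) ->
      symplectic_on U (fun z => z + h *: \sum_(i < m) b i *: k i z).

End ERK.

(* Main.v *)
Require Import Defs.
From HB Require Import structures.
From mathcomp Require Import all_boot all_order all_algebra.
From mathcomp Require Import all_classical all_reals all_analysis.
From mathcomp Require Import ring lra.
Import Order.TTheory GRing.Theory Num.Theory.
Import numFieldNormedType.Exports.
Local Open Scope ring_scope.
Local Open Scope classical_set_scope.
Set Implicit Arguments. Unset Strict Implicit. Unset Printing Implicit Defensive.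

Section Alg.
Variable R : realType.

Definition bf (N : nat) (B : 'M[R]_N) (p q : 'cV[R]_N) : R := (p^T *m B *m q) 0 0.

Lemma bfE N (B : 'M[R]_N) p q :
  bf B p q = \sum_i \sum_j p i 0 * B i j * q j 0.
Proof.
rewrite /bf mxE; under eq_bigr do rewrite mxE mulr_suml.
rewrite exchange_big /=; apply: eq_bigr => i _; apply: eq_bigr => j _.
by rewrite mxE.
Qed.

Lemma bfDl N (B : 'M[R]_N) p q r : bf B (p + q) r = bf B p r + bf B q r.
Proof. by rewrite /bf linearD /= !mulmxDl mxE. Qed.
Lemma bfDr N (B : 'M[R]_N) p q r : bf B r (p + q) = bf B r p + bf B r q.
Proof. by rewrite /bf !mulmxDr mxE. Qed.
Lemma bfZl N (B : 'M[R]_N) c p r : bf B (c *: p) r = c * bf B p r.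
Proof. by rewrite /bf linearZ /= -!scalemxAl mxE. Qed.
Lemma bfZr N (B : 'M[R]_N) c p r : bf B r (c *: p) = c * bf B r p.
Proof. by rewrite /bf -!scalemxAr mxE. Qed.
Lemma bf0l N (B : 'M[R]_N) r : bf B 0 r = 0.
Proof. by rewrite /bf linear0 !mul0mx mxE. Qed.
Lemma bf0r N (B : 'M[R]_N) r : bf B r 0 = 0.
Proof. by rewrite /bf mulmx0 mxE. Qed.
Lemma bf_suml N (B : 'M[R]_N) n (P : 'I_n -> 'cV[R]_N) r :
  bf B (\sum_i P i) r = \sum_i bf B (P i) r.
Proof.
by apply: (big_morph (fun p => bf B p r)); [move=> ? ?; apply: bfDl | apply: bf0l].
Qed.
Lemma bf_sumr N (B : 'M[R]_N) n (P : 'I_n -> 'cV[R]_N) r :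
  bf B r (\sum_i P i) = \sum_i bf B r (P i).
Proof.
by apply: (big_morph (fun p => bf B r p)); [move=> ? ?; apply: bfDr | apply: bf0r].
Qed.

Lemma null_sum (s m N : nat) (d : 'M[R]_(m - s, m)) (V : 'M[R]_(m, s))
  (Mm : 'M[R]_m) (B : 'M[R]_N) (P Q : 'I_m -> 'cV[R]_N) :
  (forall x : 'cV[R]_m, d *m x = 0 <-> exists y : 'cV[R]_s, x = V *m y) ->
  V^T *m Mm *m V = 0 ->
  (forall r, \sum_j d r j *: P j = 0) -> (forall r, \sum_j d r j *: Q j = 0) ->
  \sum_i \sum_j Mm i j * bf B (P i) (Q j) = 0.
Proof.
move=> HV HM HP HQ.
pose xc (P : 'I_m -> 'cV[R]_N) c : 'cV[R]_m := \col_i P i c 0.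
have Hx : forall P, (forall r, \sum_j d r j *: P j = 0) -> forall c,
    exists y : 'cV[R]_s, xc P c = V *m y.
  move=> P0 HP0 c; apply/HV; apply/matrixP => r k.
  rewrite !mxE (ord1 k).
  have := congr1 (fun A : 'cV[R]_N => A c 0) (HP0 r).
  rewrite /= summxE mxE => E.
  transitivity (\sum_j (d r j *: P0 j) c 0); last by [].
  by apply: eq_bigr => j _; rewrite !mxE.
have H0 : forall c c', bf Mm (xc P c) (xc Q c') = 0.
  move=> c c'; have [y ->] := Hx P HP c; have [y' ->] := Hx Q HQ c'.
  by rewrite /bf trmx_mul !mulmxA -(mulmxA _ _ Mm) -(mulmxA _ (V^T *m Mm)) HM mulmx0 mul0mx mxE.
have -> : \sum_i \sum_j Mm i j * bf B (P i) (Q j) =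
   \sum_c \sum_c' B c c' * bf Mm (xc P c) (xc Q c').
  transitivity (\sum_i \sum_j \sum_c \sum_c' Mm i j * (P i c 0 * B c c' * Q j c' 0)).
    apply: eq_bigr => i _; apply: eq_bigr => j _; rewrite bfE mulr_sumr.
    by apply: eq_bigr => c _; rewrite mulr_sumr.
  transitivity (\sum_c \sum_c' \sum_i \sum_j B c c' * (P i c 0 * Mm i j * Q j c' 0)).
    under eq_bigr => i _ do rewrite exchange_big /=.
    under eq_bigr => i _ do under eq_bigr => c _ do rewrite exchange_big /=.
    rewrite exchange_big /=.
    under eq_bigr => c _ do rewrite exchange_big /=.
    apply: eq_bigr => c _; apply: eq_bigr => c' _; apply: eq_bigr => i _.
    by apply: eq_bigr => j _; ring.
  apply: eq_bigr => c _; apply: eq_bigr => c' _; rewrite bfE mulr_sumr.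
  apply: eq_bigr => i _; rewrite mulr_sumr; apply: eq_bigr => j _; rewrite !mxE.
  by [].
by apply: big1 => c _; apply: big1 => c' _; rewrite H0 mulr0.
Qed.

Lemma keyalg (s m N : nat) (a : 'M[R]_(s, m)) (b : 'I_m -> R) (B : 'M[R]_N)
  (u v : 'cV[R]_N) (P Q : 'I_m -> 'cV[R]_N) (h : R) :
  (forall i : 'I_m, (i < s)%N ->
     bf B (P i) (v + h *: \sum_j ext_a a i j *: Q j) +
     bf B (u + h *: \sum_j ext_a a i j *: P j) (Q i) = 0) ->
  (forall i : 'I_m, (s <= i)%N -> b i = 0) ->
  \sum_i \sum_j Mmat a b i j * bf B (P i) (Q j) = 0 ->
  bf B (u + h *: \sum_i b i *: P i) (v + h *: \sum_i b i *: Q i) = bf B u v.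
Proof.
move=> Hst Hb HM.
set T1 := \sum_i b i * bf B (P i) v.
set T2 := \sum_i b i * bf B u (Q i).
set Sbb := \sum_i b i * \sum_j b j * bf B (P i) (Q j).
set Sa := \sum_i b i * \sum_j ext_a a i j * bf B (P i) (Q j).
set Sa' := \sum_i b i * \sum_j ext_a a i j * bf B (P j) (Q i).
have E1 : bf B (u + h *: \sum_i b i *: P i) (v + h *: \sum_i b i *: Q i) =
   bf B u v + h * T2 + h * T1 + h * (h * Sbb).
  rewrite bfDl !bfDr !bfZl !bfZr !bf_suml !bf_sumr /T1 /T2 /Sbb.
  rewrite -!addrA; congr (_ + (_ * _ + (_ * _ + _ * (_ * _)))).
  - by apply: eq_bigr => i _; rewrite bfZr.
  - by apply: eq_bigr => i _; rewrite bfZl.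
  - apply: eq_bigr => i _; rewrite bfZl bf_sumr; congr (_ * _).
    by apply: eq_bigr => j _; rewrite bfZr.
have E2 : T1 + T2 + h * (Sa + Sa') = 0.
  rewrite /T1 /T2 /Sa /Sa' -!big_split mulr_sumr -big_split /=; apply: big1 => i _.
  have [lis|sli] := ltnP i s; last by rewrite Hb //; ring.
  have := Hst i lis; rewrite bfDr bfDl bfZr bfZl bf_sumr bf_suml.
  move=> H.
  under eq_bigr do rewrite -bfZr.
  have -> : \sum_j ext_a a i j * bf B (P j) (Q i) =
     \sum_j bf B (ext_a a i j *: P j) (Q i) by apply: eq_bigr => j _; rewrite bfZl.
  have H' := congr1 (fun x => b i * x) H; rewrite /= mulr0 in H'.
  rewrite -[RHS]H'; ring.
have E3 : Sbb = Sa + Sa'.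
  have X : Sa' = \sum_i \sum_j b j * ext_a a j i * bf B (P i) (Q j).
    rewrite /Sa'; under eq_bigr do rewrite mulr_sumr.
    rewrite exchange_big /=; apply: eq_bigr => i _; apply: eq_bigr => j _; ring.
  have Y : Sbb - Sa - Sa' = \sum_i \sum_j Mmat a b i j * bf B (P i) (Q j).
    rewrite X /Sbb /Sa; under eq_bigr do rewrite mulr_sumr.
    under [X in _ - X - _]eq_bigr do rewrite mulr_sumr.
    rewrite -!sumrB; apply: eq_bigr => i _; rewrite -!sumrB; apply: eq_bigr => j _.
    rewrite [Mmat a b i j]mxE; ring.
  by apply/eqP; rewrite -subr_eq0 opprD addrA Y HM.
rewrite E1 E3.
have -> : T2 = - T1 - h * (Sa + Sa') by apply/eqP; rewrite -subr_eq0 -E2; apply/eqP; ring.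
ring.
Qed.
End Alg.

Section Der.
Variable R : realType.

Lemma lc_fun (V W : normedModType R) n (F : 'I_n -> V -> W) (c : 'I_n -> R) :
  (fun y => \sum_i c i *: F i y) = \sum_i (c i *: F i).
Proof. by apply/funext => y; rewrite fct_sumE. Qed.

Lemma is_derive_lc (V W : normedModType R) n (F : 'I_n -> V -> W) (c : 'I_n -> R) z u :
  (forall i, derivable (F i) z u) ->
  is_derive z u (fun y => \sum_i c i *: F i y) (\sum_i c i *: 'D_u (F i) z).
Proof.
move=> dF; rewrite lc_fun; apply: is_derive_sum => i.
apply: is_deriveZ; exact: derivableP.
Qed.

Lemma diff_lc (V W : normedModType R) n (F : 'I_n -> V -> W) (c : 'I_n -> R) z :
  (forall i, differentiable (F i) z) ->
  differentiable (fun y => \sum_i c i *: F i y) z.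
Proof.
move=> dF; rewrite lc_fun; apply: differentiable_sum => i.
exact: differentiableZ.
Qed.

Lemma is_derive_step (V : normedModType R) n (F : 'I_n -> V -> V) (c : 'I_n -> R) h z u :
  (forall i, derivable (F i) z u) ->
  is_derive z u (fun y => y + h *: \sum_i c i *: F i y) (u + h *: \sum_i c i *: 'D_u (F i) z).
Proof.
move=> dF.
have -> : (fun y => y + h *: \sum_i c i *: F i y) = id + h *: (fun y => \sum_i c i *: F i y).
  by apply/funext.
apply: is_deriveD; apply: is_deriveZ; exact: is_derive_lc.
Qed.

Lemma diff_step (V : normedModType R) n (F : 'I_n -> V -> V) (c : 'I_n -> R) h z :
  (forall i, differentiable (F i) z) ->
  differentiable (fun y => y + h *: \sum_i c i *: F i y) z.
Proof.
move=> dF.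
have -> : (fun y => y + h *: \sum_i c i *: F i y) = id + h *: (fun y => \sum_i c i *: F i y).
  by apply/funext.
apply: differentiableD; first exact: ex_diff.
apply: differentiableZ; exact: diff_lc.
Qed.

End Der.

Section Sch.
Variable R : realType.
Lemma is_derive_quad (V W : normedModType R) (g : V -> W) (z v : V) (c dd : W) :
  (forall h : R, g (h *: v + z) - g z = h *: c + (h ^+ 2) *: dd) ->
  is_derive z v g c.
Proof.
move=> Hg.
have L : (fun h : R => h^-1 *: ((g \o shift z) (h *: v) - g z)) @ 0^' --> c.
  apply: (@cvg_trans _ ((fun h : R => c + h *: dd) @ 0^')).
    apply: near_eq_cvg; near=> h.
    have hn0 : h != 0 by near: h; exact: nbhs_dnbhs_neq.
    rewrite /= Hg scalerDr scalerA mulVf // scale1r scalerA expr2 mulrA mulVf // mul1r.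
    by [].
  apply: cvg_within_filter.
  have E : c + 0 *: dd = c by rewrite scale0r addr0.
  rewrite -{2}E; apply: cvgD; first exact: cvg_cst.
  apply: cvgZl; exact: cvg_id.
split; first by apply/cvg_ex; exists c.
by apply: cvg_lim.
Unshelve. all: by end_near.
Qed.

Lemma line_der (V : normedModType R) (H : V -> R) (P w : V) (r : R) :
  differentiable H (r *: w + P) ->
  is_derive r 1 (fun r => H (r *: w + P)) ('d H (r *: w + P) w).
Proof.
move=> dH.
have dg : is_derive r 1 (fun r : R => r *: w + P) w.
  apply: (@is_derive_quad _ _ _ _ _ _ 0) => h.
  by rewrite scaler0 addr0 -[h%:A]/(h * 1) mulr1 scalerDl -[h *: w + r *: w + P]addrA addrK.
have dgd : differentiable (fun r : R => r *: w + P) r.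
  by apply/derivable1_diffP; case: dg.
have dc : differentiable (H \o (fun r : R => r *: w + P)) r.
  exact: differentiable_comp.
split; first exact: diff_derivable.
rewrite deriveE //= diff_comp //=.
have -> : 'd (fun x : R => x *: w + P) r 1 = w.
  by rewrite -deriveE // (@derive_val _ _ _ _ _ _ _ dg).
by [].
Qed.

Lemma mvt_diff (V : normedModType R) (H : V -> R) (D : V -> V -> R) (P1 P2 w : V) (t : R) :
  0 < t -> (forall z, differentiable H z) -> (forall z u, 'd H z u = D z u) ->
  exists2 xi, 0 < xi < t &
    (H (t *: w + P1) - H (t *: w + P2)) - (H P1 - H P2) =
    (D (xi *: w + P1) w - D (xi *: w + P2) w) * t.
Proof.
move=> t0 dH dD.
pose phi r := H (r *: w + P1) - H (r *: w + P2).
have der : forall r : R, is_derive r (1:R) phi (D (r *: w + P1) w - D (r *: w + P2) w).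
  move=> r; rewrite -!dD.
  have -> : phi = (fun r => H (r *: w + P1)) - (fun r => H (r *: w + P2)) by [].
  apply: is_deriveB; exact: line_der.
have [c /[!in_itv] /= /andP[c0 ct] E] := @MVT R phi (fun r => D (r *: w + P1) w - D (r *: w + P2) w) 0 t t0
   (fun r _ => der r)
   (derivable_within_continuous (fun r _ => @ex_derive _ _ _ _ _ _ _ (der r))).
exists c; first by rewrite c0 ct.
by move: E; rewrite /phi !scale0r !add0r subr0.
Qed.


Lemma tri4 (a b c e : R) : `|(a - b) - (c - e)| <= `|a| + `|b| + `|c| + `|e|.
Proof.
have h1 := ler_normB a b; have h2 := ler_normB c e.
have h3 := ler_normB (a - b) (c - e); lra.
Qed.

Lemma schwarz (V : normedModType R) (H : V -> R) (D : V -> V -> R) (Z x w : V)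
  (lw lx : V -> R) :
  (forall z, differentiable H z) -> (forall z u, 'd H z u = D z u) ->
  (forall p q, lw (p + q) = lw p + lw q) -> (forall c p, lw (c *: p) = c * lw p) ->
  (forall p q, lx (p + q) = lx p + lx q) -> (forall c p, lx (c *: p) = c * lx p) ->
  (forall eps, 0 < eps -> exists2 del, 0 < del & forall y, `|y| < del ->
     `|D (Z + y) w - D Z w - lw y| <= eps * `|y|) ->
  (forall eps, 0 < eps -> exists2 del, 0 < del & forall y, `|y| < del ->
     `|D (Z + y) x - D Z x - lx y| <= eps * `|y|) ->
  lw x = lx w.
Proof.
move=> dH dD lwD lwZ lxD lxZ Ew Ex.
set K := `|w| + `|x|.
have K0 : 0 <= K by rewrite addr_ge0.
have K1 : 0 < K + 1 by lra.
suff main : forall eps, 0 < eps -> `|lw x - lx w| <= eps * (4 * K).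
  apply/eqP; rewrite -subr_eq0 -normr_eq0 eq_le normr_ge0 andbT.
  apply/ler_addgt0Pr => z z0; rewrite add0r.
  have c0 : 0 < 4 * K + 1 by lra.
  apply: (le_trans (main (z / (4 * K + 1)) (divr_gt0 z0 c0))).
  by rewrite mulrAC ler_pdivrMr // ler_pM2l // lerDl ler01.
move=> eps e0.
have [d1 d10 H1] := Ew eps e0; have [d2 d20 H2] := Ex eps e0.
set del := Num.min d1 d2.
have del0 : 0 < del by rewrite lt_min d10 d20.
have dd1 : del <= d1 by rewrite ge_min lexx.
have dd2 : del <= d2 by rewrite ge_min lexx orbT.
set t := del / (K + 1).
have t0 : 0 < t by rewrite divr_gt0.
have tK : t * K < del.
  by rewrite /t mulrAC ltr_pdivrMr // ltr_pM2l // ltrDl ltr01.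
have bnd1 : forall (a : R) (p : V), 0 <= a <= t -> `|a *: p| <= t * `|p|.
  move=> a p /andP[a0 aT]; rewrite normrZ ger0_norm //.
  by apply: ler_wpM2r.
have bnd2 : forall (a : R) (p q : V), 0 <= a <= t -> `|a *: p + t *: q| <= t * `|p| + t * `|q|.
  move=> a p q ha; apply: (le_trans (ler_normD _ _)); apply: lerD; first exact: bnd1.
  by apply: bnd1; rewrite lexx ltW.
have [xi /andP[xi0 xit] E1] := mvt_diff (Z + t *: x) Z w t0 dH dD.
have [eta /andP[eta0 etat] E2] := mvt_diff (Z + t *: w) Z x t0 dH dD.
have e1 : t *: x + (Z + t *: w) = t *: w + (Z + t *: x).
  by rewrite [LHS]addrCA [RHS]addrCA [t *: x + _]addrC.
rewrite e1 [t *: x + Z]addrC in E2; rewrite [t *: w + Z]addrC in E1.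
have E : (D (xi *: w + (Z + t *: x)) w - D (xi *: w + Z) w) * t =
         (D (eta *: x + (Z + t *: w)) x - D (eta *: x + Z) x) * t.
  by rewrite -E1 -E2; ring.
move/(mulIf (lt0r_neq0 t0)): E.
rewrite [xi *: w + (Z + _)]addrCA [xi *: w + Z]addrC.
rewrite [eta *: x + (Z + _)]addrCA [eta *: x + Z]addrC => E.
set y1 := xi *: w + t *: x; set y2 := xi *: w.
set z1 := eta *: x + t *: w; set z2 := eta *: x.
have xi' : 0 <= xi <= t by rewrite (ltW xi0) (ltW xit).
have eta' : 0 <= eta <= t by rewrite (ltW eta0) (ltW etat).
have ny1 : `|y1| <= t * K by rewrite mulrDr; exact: bnd2.
have ny2 : `|y2| <= t * K.
  apply: (le_trans (bnd1 _ _ xi')); rewrite ler_pM2l // lerDl //.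
have nz1 : `|z1| <= t * K by rewrite mulrDr addrC; exact: bnd2.
have nz2 : `|z2| <= t * K.
  apply: (le_trans (bnd1 _ _ eta')); rewrite ler_pM2l // lerDr //.
have B : forall (u : V) (l : V -> R) d', del <= d' ->
    (forall y, `|y| < d' -> `|D (Z + y) u - D Z u - l y| <= eps * `|y|) ->
    forall y, `|y| <= t * K -> `|D (Z + y) u - D Z u - l y| <= eps * (t * K).
  move=> u l d' dd Hh y hy; apply: (le_trans (Hh y _)); last by rewrite ler_pM2l.
  exact: (lt_le_trans (le_lt_trans hy tK) dd).
rewrite -/y1 -/y2 -/z1 -/z2 in E.
have b1 := B w lw d1 dd1 H1 y1 ny1; have b2 := B w lw d1 dd1 H1 y2 ny2.
have b3 := B x lx d2 dd2 H2 z1 nz1; have b4 := B x lx d2 dd2 H2 z2 nz2.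
have eqA : t * (lw x - lx w) =
  ((D (Z + z1) x - D Z x - lx z1) - (D (Z + z2) x - D Z x - lx z2)) -
  ((D (Z + y1) w - D Z w - lw y1) - (D (Z + y2) w - D Z w - lw y2)).
  have E' : D (Z + y1) w = D (Z + y2) w + (D (Z + z1) x - D (Z + z2) x).
    by rewrite -E; ring.
  rewrite E' /y1 /y2 /z1 /z2 lwD !lwZ lxD !lxZ; ring.
have := tri4 (D (Z + z1) x - D Z x - lx z1) (D (Z + z2) x - D Z x - lx z2)
  (D (Z + y1) w - D Z w - lw y1) (D (Z + y2) w - D Z w - lw y2).
rewrite -eqA normrM (gtr0_norm t0) => T.
rewrite -(ler_pM2l t0).
apply: (le_trans T).
have -> : t * (eps * (4 * K)) = eps * (t * K) + eps * (t * K) + eps * (t * K) + eps * (t * K) by ring.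
by rewrite !lerD.
Qed.

End Sch.

Section Est.
Variable R : realType.

Lemma bfBl N (B : 'M[R]_N) p q r : bf B (p - q) r = bf B p r - bf B q r.
Proof. by rewrite /bf linearB /= !mulmxBl !mxE. Qed.

Lemma coord_le (m n : nat) (M : 'M[R]_(m, n)) i j : `|M i j| <= `|M|.
Proof.
have /mapP[k Hk ->] : `|M i j| \in [seq `|M x.1 x.2| | x : 'I_m * 'I_n].
  by apply/mapP; exists (i, j) => //=; rewrite mem_enum.
by rewrite [leRHS]/Num.norm /= mx_normrE; apply/bigmax_geP; right => /=; exists k.
Qed.

Lemma bf_bound N (B : 'M[R]_N) p q :
  `|bf B p q| <= (\sum_i \sum_j `|B i j|) * `|p| * `|q|.
Proof.
rewrite bfE mulr_suml mulr_suml.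
apply: (le_trans (ler_norm_sum _ _ _)); apply: ler_sum => i _.
rewrite mulr_suml mulr_suml.
apply: (le_trans (ler_norm_sum _ _ _)); apply: ler_sum => j _.
rewrite !normrM [`|B i j| * _]mulrC -mulrA -[X in _ <= X]mulrA.
apply: ler_pM; rewrite ?mulr_ge0 //; first exact: coord_le.
by apply: ler_pM => //; exact: coord_le.
Qed.

Lemma est N (B : 'M[R]_N) (f : 'cV[R]_N -> 'cV[R]_N) Z w :
  differentiable f Z -> forall eps, 0 < eps -> exists2 del, 0 < del &
  forall y, `|y| < del ->
    `|bf B (f (Z + y)) w - bf B (f Z) w - bf B ('d f Z y) w| <= eps * `|y|.
Proof.
move=> dfZ eps e0.
set KB := \sum_i \sum_j `|B i j|.
have KB0 : 0 <= KB by apply: sumr_ge0 => i _; apply: sumr_ge0.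
have c0 : 0 < KB * `|w| + 1 by have := mulr_ge0 KB0 (normr_ge0 w); lra.
have e'0 : 0 < eps / (KB * `|w| + 1) by rewrite divr_gt0.
have /eqaddoP Hl := diff_locally dfZ.
have := Hl _ e'0.
move=> /nbhs_norm0P [del del0 Hd]; exists del => // y yd.
move: (Hd y yd) => /=.
set e := f (y + Z) - (f Z + 'd f Z y) => Hy.
have -> : bf B (f (Z + y)) w - bf B (f Z) w - bf B ('d f Z y) w = bf B e w.
  rewrite /e !bfBl bfDl [y + Z]addrC; ring.
apply: (le_trans (bf_bound _ _ _)).
apply: (@le_trans _ _ (KB * (eps / (KB * `|w| + 1) * `|y|) * `|w|)).
  by apply: ler_wpM2r => //; apply: ler_wpM2l.
have -> : KB * (eps / (KB * `|w| + 1) * `|y|) * `|w| =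
   (eps * `|y|) * (KB * `|w| / (KB * `|w| + 1)).
  by field; rewrite gt_eqF.
apply: ler_piMr; first by rewrite mulr_ge0 // ltW.
by rewrite ler_pdivrMr // mul1r lerDl.
Qed.
End Est.

Section Ana.
Variable R : realType.

Lemma fi_zero N (f : 'cV[R]_N -> 'cV[R]_N) (C : 'M[R]_N) :
  first_integral f (quadform C) -> forall Y, bf C (f Y) Y + bf C Y (f Y) = 0.
Proof.
move=> FI Y; have [dq dq0] := FI Y.
have D : is_derive Y (f Y) (quadform C) (bf C (f Y) Y + bf C Y (f Y)).
  apply: (@is_derive_quad R _ _ _ _ _ _ (bf C (f Y) (f Y))) => t.
  have qE : forall z, quadform C z = bf C z z by [].
  rewrite !qE bfDl !bfDr !bfZl !bfZr.
  change (t *: (bf C (f Y) Y + bf C Y (f Y))) with (t * (bf C (f Y) Y + bf C Y (f Y))).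
  change (t ^+ 2 *: bf C (f Y) (f Y)) with (t ^+ 2 * bf C (f Y) (f Y)).
  ring.
by rewrite -(@derive_val _ _ _ _ _ _ _ D) deriveE.
Qed.

Lemma qp_proof (s m : nat) (a : 'M[R]_(s, m)) (b : 'I_m -> R) (d : 'M[R]_(m - s, m))
  (V : 'M[R]_(m, s)) :
  (forall x : 'cV[R]_m, d *m x = 0 <-> exists y : 'cV[R]_s, x = V *m y) ->
  (forall i : 'I_m, (s <= i)%N -> b i = 0) ->
  V^T *m Mmat a b *m V = 0 ->
  quadratic_preserving a b d.
Proof.
move=> HV Hb HM N f C _ FI h z0 k z1 [Hk Hd ->].
rewrite /quadform -/(bf C _ _) -/(bf C z0 z0).
apply: (@keyalg R s m N a b C z0 z0 k k h) => //.
  by move=> i lis; rewrite (Hk i lis); exact: fi_zero.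
exact: (null_sum _ HV HM).
Qed.
End Ana.

Section BJ.
Variable R : realType.
Lemma bfJ_anti n (p q : 'cV[R]_(n + n)) : bf (Jcan R n) p q = - bf (Jcan R n) q p.
Proof.
have tJ : (Jcan R n)^T = - Jcan R n.
  rewrite /Jcan tr_block_mx !trmx0 opp_block_mx oppr0 opprK.
  by rewrite linearN /= trmx1.
transitivity (((p^T *m Jcan R n *m q)^T) 0 0); first by rewrite mxE.
rewrite !trmx_mul trmxK tJ mulmxA mulmxN mulNmx mxE.
by rewrite /bf.
Qed.
End BJ.

Section Mn1.
Variable R : realType.
Lemma hess_sym n (f : 'cV[R]_(n + n) -> 'cV[R]_(n + n)) :
  hamiltonian_vf f -> (forall z, differentiable f z) ->
  forall Z x w, bf (Jcan R n) ('d f Z x) w = bf (Jcan R n) ('d f Z w) x.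
Proof.
move=> [H HH] df Z x w.
apply: (@schwarz R _ H (fun z u => bf (Jcan R n) (f z) u) Z x w
   (fun y => bf (Jcan R n) ('d f Z y) w) (fun y => bf (Jcan R n) ('d f Z y) x)).
- by move=> z; case: (HH z).
- by move=> z u; case: (HH z) => _ ->.
- by move=> p q; rewrite linearD bfDl.
- by move=> c p; rewrite linearZ bfZl.
- by move=> p q; rewrite linearD bfDl.
- by move=> c p; rewrite linearZ bfZl.
- move=> eps e0; have [del d0 Hd] := @est R (n + n) (Jcan R n) f Z w (df Z) eps e0.
  by exists del.
- move=> eps e0; have [del d0 Hd] := @est R (n + n) (Jcan R n) f Z x (df Z) eps e0.
  by exists del.
Qed.

End Mn1.

Section Mn2.
Variable R : realType.
Lemma symp_proof (s m : nat) (a : 'M[R]_(s, m)) (b : 'I_m -> R) (d : 'M[R]_(m - s, m))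
  (V : 'M[R]_(m, s)) :
  (forall x : 'cV[R]_m, d *m x = 0 <-> exists y : 'cV[R]_s, x = V *m y) ->
  (forall i : 'I_m, (s <= i)%N -> b i = 0) ->
  V^T *m Mmat a b *m V = 0 ->
  erk_symplectic a b d.
Proof.
move=> HV Hb HM n f Hham df h U k Uo kd Hstep z Uz.
have nU : nbhs z U by apply: open_nbhs_nbhs; split.
have kdz : forall i, differentiable (k i) z by move=> i; exact: kd.
have kder : forall i u, derivable (k i) z u by move=> i u; exact: diff_derivable.
split; first exact: diff_step.
move=> u v.
have dPhi : forall u', 'd (fun z => z + h *: \sum_i b i *: k i z) z u' =
    u' + h *: \sum_i b i *: 'D_u' (k i) z.
  move=> u'; rewrite -deriveE; last exact: diff_step.
  exact: (@derive_val _ _ _ _ _ _ _ (is_derive_step b h (kder^~ u'))).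
rewrite !dPhi.
apply: (@keyalg R s m (n + n) a b (Jcan R n) u v (fun i => 'D_u (k i) z)
          (fun i => 'D_v (k i) z) h) => //.
  move=> i lis.
  pose G := fun y => y + h *: \sum_j ext_a a i j *: k j y.
  have Pi : forall u', 'D_u' (k i) z = 'd f (G z) (u' + h *: \sum_j ext_a a i j *: 'D_u' (k j) z).
    move=> u'.
    have -> : 'D_u' (k i) z = 'D_u' (f \o G) z.
      apply: near_eq_derive; apply: filterS nU => y Uy /=.
      by case: (Hstep y Uy) => Hk _ _; rewrite (Hk i lis).
    have dG : differentiable G z := @diff_step R _ m k (ext_a a i) h z kdz.
    have dfG : differentiable (f \o G) z := differentiable_comp dG (df (G z)).
    apply: (eq_trans (deriveE u' dfG)).
    apply: (eq_trans (congr1 (fun F => F u') (diff_comp dG (df (G z))))).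
    apply: (f_equal ('d f (G z))).
    apply: (eq_trans (esym (deriveE u' dG))).
    exact: (@derive_val _ _ _ _ _ _ _ (@is_derive_step R _ m k (ext_a a i) h z u' (kder^~ u'))).
  set A := u + _; set Bv := v + _.
  transitivity (bf (Jcan R n) ('d f (G z) A) Bv + bf (Jcan R n) A ('d f (G z) Bv)).
    exact: (congr2 +%R (congr2 (bf (Jcan R n)) (Pi u) erefl) (congr2 (bf (Jcan R n)) erefl (Pi v))).
  have e1 := hess_sym Hham df (G z) A Bv.
  have e2 := bfJ_anti A ('d f (G z) Bv).
  rewrite e1 e2; exact: addrN.
have cstr : forall (u' : 'cV[R]_(n + n)) (r : 'I_(m - s)), \sum_j d r j *: 'D_u' (k j) z = 0.
  move=> u' r.
  have E := @derive_val _ _ _ _ _ _ _ (is_derive_lc (d r) (kder^~ u')).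
  apply: (eq_trans (esym E)).
  have N0 : \forall y \near z, \sum_j d r j *: k j y = (cst 0 : 'cV[R]_(n + n) -> 'cV[R]_(n + n)) y.
    apply: filterS nU => y Uy.
    by case: (Hstep y Uy) => _ Hd _; exact: Hd.
  apply: (eq_trans (@near_eq_derive _ _ _ (fun y => \sum_j d r j *: k j y) (cst 0) z u' N0)).
  exact: derive_cst.
exact: (null_sum _ HV HM (cstr u) (cstr v)).
Qed.

End Mn2.

Theorem proposition3 (R : realType) (s m : nat) (a : 'M[R]_(s, m))
  (b : 'I_m -> R) (d : 'M[R]_(m - s, m)) (V : 'M[R]_(m, s)) :
  (s <= m)%N ->
  \rank d = (m - s)%N ->
  (* the columns of V form a basis of the nullspace of d *)
  (forall x : 'cV[R]_m, d *m x = 0 <-> exists y : 'cV[R]_s, x = V *m y) ->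
  \rank V = s ->
  (forall i : 'I_m, (s <= i)%N -> b i = 0) ->
  V^T *m Mmat a b *m V = 0 ->
  quadratic_preserving a b d /\ erk_symplectic a b d.
Proof.
move=> _ _ HV _ Hb HM; split; [exact: qp_proof HV Hb HM | exact: symp_proof HV Hb HM].
Qed.
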